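(* Let $\mathscr{A}$ be an abelian category, $\mathbb{T}$ a finite category, $\mathbb{S}$ a replete full subcategory of $\mathbb{T}$, $\mathscr{F}\subseteq\mathscr{A}^\mathbb{T}$ the full subcategory of functors vanishing on all objects not in $\mathbb{S}$, with reflection $\mathsf{F}$ and unit $\eta$ (so $(\eta_F)_T=\mathrm{cok}([F(t)]_{t\in[T]})$). Let $\alpha:F\to G$ be a regular epimorphism in $\mathscr{A}^\mathbb{T}$. Then the following are equivalent: (1) $\alpha$ is a trivial extension with respect to $\mathscr{F}$; (2) for every $T\in\mathbb{T}$, the morphisms $\alpha_T$ and $(\eta_F)_T$ are jointly monomorphic. Moreover, for $T\notin\mathbb{S}$ the condition in (2) amounts to $\alpha_T$ being an isomorphism.
   Context: For $T\in\mathbb{T}$, $[T]$ is the set of morphisms $t:T'\to T$ with $T'\notin\mathbb{S}$, $d(t):=T'$, and $[F(t)]_{t\in[T]}:\bigoplus_{t\in[T]}F(d(t))\to F(T)$ is induced by the $F(t)$. An extension is a regular epimorphism in $\mathscr{A}^\mathbb{T}$. An extension $\alpha:F\to G$ is a trivial extension with respect to $\mathscr{F}$ if the naturality square $\eta_G\circ\alpha=\mathsf{F}(\alpha)\circ\eta_F$ (with $\mathsf{F}(\alpha):\mathsf{F}(F)\to\mathsf{F}(G)$) is a pullback in $\mathscr{A}^\mathbb{T}$. *)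

(* Defs.v *)
From Stdlib Require Import List FunctionalExtensionality ProofIrrelevance.

Set Implicit Arguments.

Record Category := {
  Ob : Type;
  Hom : Ob -> Ob -> Type;
  idm : forall a, Hom a a;
  comp : forall a b c, Hom b c -> Hom a b -> Hom a c;
  comp_id_l : forall a b (f : Hom a b), comp (idm b) f = f;
  comp_id_r : forall a b (f : Hom a b), comp f (idm a) = f;
  comp_assoc : forall a b c d (f : Hom a b) (g : Hom b c) (h : Hom c d),
      comp h (comp g f) = comp (comp h g) f
}.

Arguments idm {C} a : rename.
Arguments comp {C a b c} _ _ : rename.
Notation "g \o f" := (comp g f) (at level 40, left associativity).

Section Basic.
Variable C : Category.

Definition is_mono {a b : Ob C} (f : Hom C a b) : Prop :=
  forall x (g h : Hom C x a), f \o g = f \o h -> g = h.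

Definition is_iso {a b : Ob C} (f : Hom C a b) : Prop :=
  exists g : Hom C b a, g \o f = idm a /\ f \o g = idm b.

Definition isomorphic (a b : Ob C) : Prop :=
  exists f : Hom C a b, is_iso f.

Definition jointly_mono {x a b : Ob C} (f : Hom C x a) (g : Hom C x b) : Prop :=
  forall y (u v : Hom C y x), f \o u = f \o v -> g \o u = g \o v -> u = v.

Definition is_zero_object (z : Ob C) : Prop :=
  (forall x, exists f : Hom C x z, forall g, g = f) /\
  (forall x, exists f : Hom C z x, forall g, g = f).

Definition is_zero_mor {a b : Ob C} (f : Hom C a b) : Prop :=
  exists z (u : Hom C a z) (v : Hom C z b), is_zero_object z /\ f = v \o u.

Definition is_kernel {k a b : Ob C} (m : Hom C k a) (f : Hom C a b) : Prop :=
  is_zero_mor (f \o m) /\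
  forall x (h : Hom C x a), is_zero_mor (f \o h) ->
    exists u : Hom C x k, m \o u = h /\ forall u', m \o u' = h -> u' = u.

Definition is_cokernel {a b q : Ob C} (e : Hom C b q) (f : Hom C a b) : Prop :=
  is_zero_mor (e \o f) /\
  forall x (h : Hom C b x), is_zero_mor (h \o f) ->
    exists u : Hom C q x, u \o e = h /\ forall u', u' \o e = h -> u' = u.

Definition is_product {p a b : Ob C} (p1 : Hom C p a) (p2 : Hom C p b) : Prop :=
  forall x (f : Hom C x a) (g : Hom C x b),
    exists u : Hom C x p, (p1 \o u = f /\ p2 \o u = g) /\
      forall u', p1 \o u' = f -> p2 \o u' = g -> u' = u.

Definition is_coproduct {a b p : Ob C} (i1 : Hom C a p) (i2 : Hom C b p) : Prop :=
  forall x (f : Hom C a x) (g : Hom C b x),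
    exists u : Hom C p x, (u \o i1 = f /\ u \o i2 = g) /\
      forall u', u' \o i1 = f -> u' \o i2 = g -> u' = u.

Definition is_coequalizer {a b q : Ob C} (f g : Hom C a b) (e : Hom C b q) : Prop :=
  e \o f = e \o g /\
  forall x (h : Hom C b x), h \o f = h \o g ->
    exists u : Hom C q x, u \o e = h /\ forall u', u' \o e = h -> u' = u.

Definition is_regular_epi {b q : Ob C} (e : Hom C b q) : Prop :=
  exists a (f g : Hom C a b), is_coequalizer f g e.

Definition is_pullback {p a b c : Ob C}
    (p1 : Hom C p a) (p2 : Hom C p b) (f : Hom C a c) (g : Hom C b c) : Prop :=
  f \o p1 = g \o p2 /\
  forall x (h1 : Hom C x a) (h2 : Hom C x b), f \o h1 = g \o h2 ->
    exists u : Hom C x p, (p1 \o u = h1 /\ p2 \o u = h2) /\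
      forall u', p1 \o u' = h1 -> p2 \o u' = h2 -> u' = u.

Definition is_epi {a b : Ob C} (f : Hom C a b) : Prop :=
  forall x (g h : Hom C b x), g \o f = h \o f -> g = h.

Definition is_abelian : Prop :=
  (exists z, is_zero_object z) /\
  (forall a b, exists p (p1 : Hom C p a) (p2 : Hom C p b), is_product p1 p2) /\
  (forall a b, exists p (i1 : Hom C a p) (i2 : Hom C b p), is_coproduct i1 i2) /\
  (forall a b (f : Hom C a b), exists k (m : Hom C k a), is_kernel m f) /\
  (forall a b (f : Hom C a b), exists q (e : Hom C b q), is_cokernel e f) /\
  (forall a b (m : Hom C a b), is_mono m -> exists c (f : Hom C b c), is_kernel m f) /\
  (forall a b (e : Hom C a b), is_epi e -> exists c (f : Hom C c a), is_cokernel e f).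

Definition finite_category : Prop :=
  (exists l : list (Ob C), forall a, In a l) /\
  (forall a b, exists l : list (Hom C a b), forall f, In f l).

(** A replete full subcategory, given by a predicate on objects closed
    under isomorphism. *)
Definition replete (S : Ob C -> Prop) : Prop :=
  forall a b, S a -> isomorphic a b -> S b.

End Basic.

Record Functor (C D : Category) := {
  fob :> Ob C -> Ob D;
  fmap : forall a b, Hom C a b -> Hom D (fob a) (fob b);
  fmap_id : forall a, fmap a a (idm a) = idm (fob a);
  fmap_comp : forall a b c (f : Hom C a b) (g : Hom C b c),
      fmap a c (g \o f) = fmap b c g \o fmap a b f
}.
Arguments fmap {C D} _ {a b} _.

Record NatTrans {C D : Category} (F G : Functor C D) := {
  component :> forall a : Ob C, Hom D (F a) (G a);
  naturality : forall a b (f : Hom C a b),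
      component b \o fmap F f = fmap G f \o component a
}.

Section FunCat.
Variables C D : Category.

Lemma nat_trans_eq (F G : Functor C D) (s t : NatTrans F G) :
  (forall a, s a = t a) -> s = t.
Proof.
  destruct s as [s Hs], t as [t Ht]; simpl; intros E.
  assert (s = t) by (apply functional_extensionality_dep; exact E).
  subst t. f_equal. apply proof_irrelevance.
Qed.

Program Definition nt_id (F : Functor C D) : NatTrans F F :=
  {| component := fun a => idm (F a) |}.
Next Obligation. now rewrite comp_id_l, comp_id_r. Qed.

Program Definition nt_comp (F G H : Functor C D)
  (t : NatTrans G H) (s : NatTrans F G) : NatTrans F H :=
  {| component := fun a => t a \o s a |}.
Next Obligation.
  rewrite <- comp_assoc, naturality, comp_assoc, naturality, comp_assoc.
  reflexivity.
Qed.

Program Definition FunCat : Category :=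
  {| Ob := Functor C D; Hom := fun F G => NatTrans F G;
     idm := nt_id; comp := nt_comp |}.
Next Obligation. apply nat_trans_eq; intros; simpl; apply comp_id_l. Qed.
Next Obligation. apply nat_trans_eq; intros; simpl; apply comp_id_r. Qed.
Next Obligation. apply nat_trans_eq; intros; simpl; apply comp_assoc. Qed.

End FunCat.

Section Reflection.
Variables (T A : Category) (S : Ob T -> Prop).

Definition in_F (F : Functor T A) : Prop :=
  forall t : Ob T, ~ S t -> is_zero_object A (F t).

Definition is_reflection (R : Functor T A -> Functor T A)
    (eta : forall F, NatTrans F (R F)) : Prop :=
  forall F, in_F (R F) /\
    forall G, in_F G -> forall beta : NatTrans F G,
      exists gamma : NatTrans (R F) G,
        @comp (FunCat T A) _ _ _ gamma (eta F) = beta /\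
        forall gamma' : NatTrans (R F) G,
          @comp (FunCat T A) _ _ _ gamma' (eta F) = beta -> gamma' = gamma.

(** Trivial extension: the naturality square  η_G ∘ α = 𝖥(α) ∘ η_F  is a
    pullback in A^T, where 𝖥(α) : 𝖥F → 𝖥G is the (unique) morphism
    induced by the reflection. *)
Definition trivial_extension (R : Functor T A -> Functor T A)
    (eta : forall F, NatTrans F (R F)) {F G : Functor T A}
    (alpha : NatTrans F G) : Prop :=
  forall Ralpha : NatTrans (R F) (R G),
    @comp (FunCat T A) _ _ _ Ralpha (eta F)
      = @comp (FunCat T A) _ _ _ (eta G) alpha ->
    @is_pullback (FunCat T A) F G (R F) (R G) alpha (eta F) (eta G) Ralpha.

End Reflection.

(* Main.v *)
Require Import Defs.
From Stdlib Require Import List FunctionalExtensionality ProofIrrelevance ClassicalEpsilon.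
Set Implicit Arguments.

Lemma zo_out (A : Category) (z : Ob A) : is_zero_object A z ->
  forall x (f g : Hom A z x), f = g.
Proof. intros [_ H] x f g. destruct (H x) as [u Hu]. rewrite (Hu f), (Hu g). reflexivity. Qed.

Lemma zo_in (A : Category) (z : Ob A) : is_zero_object A z ->
  forall x (f g : Hom A x z), f = g.
Proof. intros [H _] x f g. destruct (H x) as [u Hu]. rewrite (Hu f), (Hu g). reflexivity. Qed.

Lemma zm_unique (A : Category) (a b : Ob A) (f g : Hom A a b) :
  is_zero_mor A f -> is_zero_mor A g -> f = g.
Proof.
  intros [z [u [v [Hz ->]]]] [z' [u' [v' [Hz' ->]]]].
  destruct (proj2 Hz z') as [e _]. destruct (proj2 Hz' z) as [e' _].
  rewrite (zo_in Hz _ u (e' \o u')). rewrite (zo_out Hz _ v (v' \o e)).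
  rewrite comp_assoc. rewrite <- (comp_assoc _ _ _ _ _ e' e v').
  rewrite (zo_out Hz' _ (e \o e') (idm z')). rewrite comp_id_r. reflexivity.
Qed.

Lemma zm_pre (A : Category) (a b c : Ob A) (g : Hom A a b) (f : Hom A b c) :
  is_zero_mor A f -> is_zero_mor A (f \o g).
Proof. intros [z [u [v [Hz ->]]]]. exists z, (u \o g), v. split; auto. apply eq_sym, comp_assoc. Qed.

Lemma zm_post (A : Category) (a b c : Ob A) (f : Hom A a b) (g : Hom A b c) :
  is_zero_mor A f -> is_zero_mor A (g \o f).
Proof. intros [z [u [v [Hz ->]]]]. exists z, u, (g \o v). split; auto. apply comp_assoc. Qed.

Lemma zm_exists (A : Category) (HA : is_abelian A) (a b : Ob A) :
  exists f : Hom A a b, is_zero_mor A f.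
Proof.
  destruct HA as [[z Hz] _]. destruct (proj1 Hz a) as [u _]. destruct (proj2 Hz b) as [v _].
  exists (v \o u), z, u, v. auto.
Qed.

Lemma ker_mono (A : Category) k a b (m : Hom A k a) (f : Hom A a b) :
  is_kernel A m f -> is_mono A m.
Proof.
  intros [H0 H] x g h E.
  destruct (H x (m \o g)) as [u [Hu Hun]].
  { rewrite comp_assoc. apply zm_pre. exact H0. }
  rewrite (Hun g eq_refl), (Hun h (eq_sym E)). reflexivity.
Qed.

Lemma coker_epi (A : Category) a b q (e : Hom A b q) (f : Hom A a b) :
  is_cokernel A e f -> is_epi A e.
Proof.
  intros [H0 H] x g h E.
  destruct (H x (g \o e)) as [u [Hu Hun]].
  { rewrite <- comp_assoc. apply zm_post. exact H0. }
  rewrite (Hun g eq_refl), (Hun h (eq_sym E)). reflexivity.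
Qed.

Lemma mono_ker_coker (A : Category) (HA : is_abelian A) a b q (m : Hom A a b) (e : Hom A b q) :
  is_mono A m -> is_cokernel A e m -> is_kernel A m e.
Proof.
  intros Hm He. destruct HA as (_&_&_&_&_&Hmk&_).
  destruct (Hmk _ _ m Hm) as [c [f Hk]].
  split. apply (proj1 He).
  intros x h Hh. destruct (proj2 He c f (proj1 Hk)) as [f' [Hf' _]].
  apply (proj2 Hk). rewrite <- Hf', <- comp_assoc. apply zm_post. exact Hh.
Qed.

Lemma epi_coker_ker (A : Category) (HA : is_abelian A) K a b (e : Hom A a b) (k : Hom A K a) :
  is_epi A e -> is_kernel A k e -> is_cokernel A e k.
Proof.
  intros He Hk. destruct HA as (_&_&_&_&_&_&Hec).
  destruct (Hec _ _ e He) as [c [f Hc]].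
  split. apply (proj1 Hk).
  intros x h Hh. destruct (proj2 Hk c f (proj1 Hc)) as [f' [Hf' _]].
  apply (proj2 Hc). rewrite <- Hf', comp_assoc. apply zm_pre. exact Hh.
Qed.

Lemma ker_zero_iso (A : Category) k a b (m : Hom A k a) (f : Hom A a b) :
  is_kernel A m f -> is_zero_mor A f -> is_iso A m.
Proof.
  intros Hk Hf. destruct (proj2 Hk a (idm a)) as [u [Hu _]].
  { apply zm_pre. exact Hf. }
  exists u. split; auto.
  apply (ker_mono Hk). rewrite comp_assoc, Hu, comp_id_l, comp_id_r. reflexivity.
Qed.

Lemma mono_epi_iso (A : Category) (HA : is_abelian A) a b (m : Hom A a b) :
  is_mono A m -> is_epi A m -> is_iso A m.
Proof.
  intros Hm He. pose proof HA as EHA; destruct HA as (Hz&Hp&Hcp&Hker&Hcok&Hmk&Hec).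
  destruct (Hcok _ _ m) as [q [e Hc]].
  pose proof (mono_ker_coker EHA Hm Hc) as Hk.
  destruct (zm_exists EHA b q) as [z Hz0].
  assert (e = z). { apply He. apply zm_unique. apply (proj1 Hc). apply zm_pre; auto. }
  subst. apply (ker_zero_iso Hk Hz0).
Qed.

Lemma equalizer_exists (A : Category) (HA : is_abelian A) a b (x y : Hom A a b) :
  exists e (j : Hom A e a), x \o j = y \o j /\
    forall w (h : Hom A w a), x \o h = y \o h ->
      exists u, j \o u = h /\ forall u', j \o u' = h -> u' = u.
Proof.
  pose proof HA as EHA; destruct HA as (Hz&Hp&Hcp&Hker&Hcok&Hmk&Hec).
  destruct (Hp a b) as [p [p1 [p2 Hpr]]].
  destruct (Hpr a (idm a) x) as [s [[Hs1 Hs2] _]].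
  destruct (Hpr a (idm a) y) as [t [[Ht1 Ht2] _]].
  assert (Hsm : is_mono A s).
  { intros w g h E. rewrite <- (comp_id_l _ _ _ g), <- (comp_id_l _ _ _ h), <- Hs1, <- !comp_assoc, E. reflexivity. }
  destruct (Hmk _ _ s Hsm) as [c [f Hk]].
  destruct (Hker _ _ (f \o t)) as [J [j Hj]].
  destruct (proj2 Hk J (t \o j)) as [i [Hi _]].
  { rewrite comp_assoc. apply (proj1 Hj). }
  assert (Eji : j = i).
  { rewrite <- (comp_id_l _ _ _ j), <- Ht1, <- comp_assoc, <- Hi, comp_assoc, Hs1, comp_id_l. reflexivity. }
  subst i.
  exists J, j. split.
  - rewrite <- Hs2, <- Ht2, <- !comp_assoc, Hi. reflexivity.
  - intros w h Hh.
    assert (E : t \o h = s \o h).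
    { destruct (Hpr w h (x \o h)) as [u0 [_ Hu0]].
      rewrite (Hu0 (s \o h)), (Hu0 (t \o h)); auto.
      + rewrite comp_assoc, Ht1, comp_id_l; auto.
      + rewrite comp_assoc, Ht2; auto.
      + rewrite comp_assoc, Hs1, comp_id_l; auto.
      + rewrite comp_assoc, Hs2; auto. }
    destruct (proj2 Hj w h) as [u [Hu Hun]].
    { rewrite <- comp_assoc, E, comp_assoc. apply zm_pre. apply (proj1 Hk). }
    exists u. split; auto.
Qed.

Lemma pullback_exists (A : Category) (HA : is_abelian A) a b c (f : Hom A a c) (g : Hom A b c) :
  exists p (p1 : Hom A p a) (p2 : Hom A p b), is_pullback A p1 p2 f g.
Proof.
  pose proof HA as EHA; destruct HA as (Hz&Hp&Hcp&Hker&Hcok&Hmk&Hec).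
  destruct (Hp a b) as [q [q1 [q2 Hq]]].
  destruct (equalizer_exists EHA _ _ (f \o q1) (g \o q2)) as [e [j [Hj1 Hj2]]].
  exists e, (q1 \o j), (q2 \o j). split.
  - rewrite !comp_assoc. exact Hj1.
  - intros x h1 h2 Hh.
    destruct (Hq x h1 h2) as [w [[Hw1 Hw2] Hwu]].
    destruct (Hj2 x w) as [u [Hu Hun]].
    { rewrite <- !comp_assoc, Hw1, Hw2. exact Hh. }
    exists u. split.
    + rewrite <- !comp_assoc, Hu. auto.
    + intros u' H1 H2. apply Hun. apply Hwu; rewrite comp_assoc; auto.
Qed.

Lemma pb_jm (A : Category) p a b c (p1 : Hom A p a) (p2 : Hom A p b) (f : Hom A a c) (g : Hom A b c) :
  is_pullback A p1 p2 f g -> jointly_mono A p1 p2.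
Proof.
  intros [Hc H] y u v E1 E2.
  destruct (H y (p1 \o u) (p2 \o u)) as [w [_ Hw]].
  { rewrite !comp_assoc, Hc. reflexivity. }
  rewrite (Hw u), (Hw v); auto.
Qed.

Lemma coker_zero_epi (A : Category) (HA : is_abelian A) a b Q (f : Hom A a b) (q : Hom A b Q) :
  is_cokernel A q f -> is_zero_mor A q -> is_epi A f.
Proof.
  intros Hq Hz X x y E.
  pose proof HA as EHA; destruct HA as (_&_&_&Hker&Hcok&Hmk&Hec).
  destruct (equalizer_exists EHA _ _ x y) as [e [j [Hj1 Hj2]]].
  destruct (Hj2 _ f E) as [f' [Hf' _]].
  assert (Hjm : is_mono A j).
  { intros w g h Eg. destruct (Hj2 w (j \o g)) as [u [_ Hu]].
    { rewrite !comp_assoc, Hj1. reflexivity. }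
    rewrite (Hu g), (Hu h); auto. }
  destruct (Hcok _ _ j) as [c [ec Hec']].
  pose proof (mono_ker_coker EHA Hjm Hec') as Hk.
  destruct (proj2 Hq c ec) as [e' [He' _]].
  { rewrite <- Hf', comp_assoc. apply zm_pre. apply (proj1 Hec'). }
  assert (Hecz : is_zero_mor A ec). { rewrite <- He'. apply zm_post. exact Hz. }
  destruct (ker_zero_iso Hk Hecz) as [ji [Hji1 Hji2]].
  rewrite <- (comp_id_r _ _ _ x), <- (comp_id_r _ _ _ y), <- Hji2, !comp_assoc, Hj1. reflexivity.
Qed.

Lemma zero_epi_target (A : Category) z C (e : Hom A z C) :
  is_zero_object A z -> is_epi A e -> is_zero_object A C.
Proof.
  intros Hz He.
  assert (Hout : forall x (g h : Hom A C x), g = h).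
  { intros x g h. apply He. apply (zo_out Hz). }
  destruct (proj1 Hz C) as [s _].
  split.
  - intros x. destruct (proj1 Hz x) as [t _]. exists (e \o t). intros g.
    rewrite <- (comp_id_l _ _ _ g). rewrite (Hout C (idm C) (e \o s)).
    rewrite <- comp_assoc. f_equal. apply (zo_in Hz).
  - intros x. destruct (proj2 Hz x) as [t _]. exists (t \o s). intros g. apply Hout.
Qed.

Lemma coker_iso (A : Category) a b C C' (f : Hom A a b) (c : Hom A b C) (v : Hom A C C') :
  is_cokernel A c f -> is_iso A v -> is_cokernel A (v \o c) f.
Proof.
  intros [H0 H] [vi [Hv1 Hv2]]. split.
  - rewrite <- comp_assoc. apply zm_post. exact H0.
  - intros x h Hh. destruct (H x h Hh) as [u [Hu Hun]].
    exists (u \o vi). split.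
    + rewrite <- comp_assoc, (comp_assoc _ _ _ _ _ c v vi), Hv1, comp_id_l. exact Hu.
    + intros u' Hu'. rewrite <- (Hun (u' \o v)).
      * rewrite <- comp_assoc, Hv2, comp_id_r. reflexivity.
      * rewrite <- comp_assoc. exact Hu'.
Qed.

Lemma key_pullback (A : Category) (HA : is_abelian A) K F G B D
  (a : Hom A F G) (b : Hom A F B) (g : Hom A G D) (h : Hom A B D) (k : Hom A K F) :
  is_epi A a -> g \o a = h \o b -> is_kernel A k a -> is_cokernel A h (b \o k) ->
  jointly_mono A a b -> is_pullback A a b g h.
Proof.
  intros Ha Hsq Hk Hh Hjm.
  destruct (pullback_exists HA _ _ _ g h) as [P [p1 [p2 Hpb]]].
  destruct (proj2 Hpb F a b Hsq) as [c [[Hc1 Hc2] _]].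
  assert (Hcm : is_mono A c).
  { intros y u v E. apply Hjm.
    - rewrite <- Hc1, <- !comp_assoc, E. reflexivity.
    - rewrite <- Hc2, <- !comp_assoc, E. reflexivity. }
  assert (Hp1e : is_epi A p1).
  { intros y x1 x2 E. apply Ha. rewrite <- Hc1, !comp_assoc, E. reflexivity. }
  pose proof HA as HA'. destruct HA' as (_&_&_&Hker&Hcok&_&_).
  destruct (Hker _ _ p1) as [L [l Hl]].
  assert (Hbkm : is_mono A (b \o k)).
  { intros y u v E. apply (ker_mono Hk). apply Hjm.
    - apply zm_unique; rewrite comp_assoc; apply zm_pre; apply (proj1 Hk).
    - rewrite !comp_assoc. exact E. }
  pose proof (mono_ker_coker HA Hbkm Hh) as Hbk.
  destruct (proj2 Hbk L (p2 \o l)) as [w [Hw _]].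
  { rewrite comp_assoc, <- (proj1 Hpb), <- comp_assoc. apply zm_post. apply (proj1 Hl). }
  assert (Hckw : c \o (k \o w) = l).
  { destruct (proj2 Hpb L (p1 \o l) (p2 \o l)) as [u0 [_ Hu0]].
    { rewrite !comp_assoc, (proj1 Hpb). reflexivity. }
    rewrite (Hu0 l eq_refl eq_refl). apply Hu0.
    - rewrite comp_assoc, Hc1. apply zm_unique.
      + rewrite comp_assoc. apply zm_pre. apply (proj1 Hk).
      + apply (proj1 Hl).
    - rewrite comp_assoc, Hc2, comp_assoc. exact Hw. }
  destruct (Hcok _ _ c) as [Q [q Hq]].
  pose proof (epi_coker_ker HA Hp1e Hl) as Hp1c.
  destruct (proj2 Hp1c Q q) as [q' [Hq' _]].
  { rewrite <- Hckw, comp_assoc. apply zm_pre. apply (proj1 Hq). }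
  destruct (zm_exists HA G Q) as [z Hz].
  assert (q' = z).
  { apply Ha. apply zm_unique.
    - rewrite <- Hc1, comp_assoc, Hq'. apply (proj1 Hq).
    - apply zm_pre. exact Hz. }
  subst q'.
  assert (Hqz : is_zero_mor A q). { rewrite <- Hq'. apply zm_pre. exact Hz. }
  destruct (ker_zero_iso (mono_ker_coker HA Hcm Hq) Hqz) as [d [Hd1 Hd2]].
  split; auto.
  intros x h1 h2 E. destruct (proj2 Hpb x h1 h2 E) as [u0 [[Hu1 Hu2] _]].
  exists (d \o u0). split.
  - split.
    + rewrite <- Hc1, comp_assoc, <- (comp_assoc _ _ _ _ _ d c p1), Hd2, comp_id_r. exact Hu1.
    + rewrite <- Hc2, comp_assoc, <- (comp_assoc _ _ _ _ _ d c p2), Hd2, comp_id_r. exact Hu2.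
  - intros u' E1 E2. apply Hjm.
    + rewrite E1, <- Hc1, comp_assoc, <- (comp_assoc _ _ _ _ _ d c p1), Hd2, comp_id_r. auto.
    + rewrite E2, <- Hc2, comp_assoc, <- (comp_assoc _ _ _ _ _ d c p2), Hd2, comp_id_r. auto.
Qed.

Section Lift.
Variables (T A : Category) (F1 F2 : Functor T A) (O : Ob T -> Ob A)
  (m1 : forall t, Hom A (O t) (F1 t)) (m2 : forall t, Hom A (O t) (F2 t))
  (jm : forall t, jointly_mono A (m1 t) (m2 t))
  (ex : forall t t' (f : Hom T t t'), exists u : Hom A (O t) (O t'),
      m1 t' \o u = fmap F1 f \o m1 t /\ m2 t' \o u = fmap F2 f \o m2 t).

Definition lift_fmap {t t'} (f : Hom T t t') : Hom A (O t) (O t') :=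
  proj1_sig (constructive_indefinite_description _ (ex t t' f)).

Lemma lift_spec {t t'} (f : Hom T t t') :
  m1 t' \o lift_fmap f = fmap F1 f \o m1 t /\ m2 t' \o lift_fmap f = fmap F2 f \o m2 t.
Proof. unfold lift_fmap. destruct (constructive_indefinite_description _ _) as [u Hu]. exact Hu. Qed.

Lemma lift_id t : lift_fmap (idm t) = idm (O t).
Proof.
  destruct (lift_spec (idm t)) as [H1 H2]. apply jm.
  - rewrite H1, fmap_id, comp_id_l, comp_id_r. reflexivity.
  - rewrite H2, fmap_id, comp_id_l, comp_id_r. reflexivity.
Qed.

Lemma lift_comp a b c (f : Hom T a b) (g : Hom T b c) :
  lift_fmap (g \o f) = lift_fmap g \o lift_fmap f.
Proof.
  destruct (lift_spec (g \o f)) as [H1 H2].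
  destruct (lift_spec f) as [F1' F2']. destruct (lift_spec g) as [G1 G2].
  apply jm.
  - rewrite H1, comp_assoc, G1, <- comp_assoc, F1', fmap_comp, comp_assoc. reflexivity.
  - rewrite H2, comp_assoc, G2, <- comp_assoc, F2', fmap_comp, comp_assoc. reflexivity.
Qed.

Definition lift_functor : Functor T A :=
  Build_Functor T A O (@lift_fmap) lift_id lift_comp.

Lemma lift_nat1_proof a b (f : Hom T a b) :
  m1 b \o fmap lift_functor f = fmap F1 f \o m1 a.
Proof. apply (proj1 (lift_spec f)). Qed.
Lemma lift_nat2_proof a b (f : Hom T a b) :
  m2 b \o fmap lift_functor f = fmap F2 f \o m2 a.
Proof. apply (proj2 (lift_spec f)). Qed.

Definition lift_nat1 : NatTrans lift_functor F1 := Build_NatTrans lift_functor F1 m1 lift_nat1_proof.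
Definition lift_nat2 : NatTrans lift_functor F2 := Build_NatTrans lift_functor F2 m2 lift_nat2_proof.
End Lift.

Section Desc.
Variables (T A : Category) (E : Functor T A) (O : Ob T -> Ob A)
  (e : forall t, Hom A (E t) (O t))
  (ep : forall t, is_epi A (e t))
  (ex : forall t t' (f : Hom T t t'), exists u : Hom A (O t) (O t'),
      u \o e t = e t' \o fmap E f).

Definition desc_fmap {t t'} (f : Hom T t t') : Hom A (O t) (O t') :=
  proj1_sig (constructive_indefinite_description _ (ex t t' f)).

Lemma desc_spec {t t'} (f : Hom T t t') : desc_fmap f \o e t = e t' \o fmap E f.
Proof. unfold desc_fmap. destruct (constructive_indefinite_description _ _) as [u Hu]. exact Hu. Qed.

Lemma desc_id t : desc_fmap (idm t) = idm (O t).
Proof.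
  apply ep. rewrite desc_spec, fmap_id, comp_id_l, comp_id_r. reflexivity.
Qed.

Lemma desc_comp a b c (f : Hom T a b) (g : Hom T b c) :
  desc_fmap (g \o f) = desc_fmap g \o desc_fmap f.
Proof.
  apply ep. rewrite desc_spec, <- comp_assoc, desc_spec, comp_assoc, desc_spec,
    fmap_comp, comp_assoc. reflexivity.
Qed.

Definition desc_functor : Functor T A :=
  Build_Functor T A O (@desc_fmap) desc_id desc_comp.

Lemma desc_nat_proof a b (f : Hom T a b) :
  e b \o fmap E f = fmap desc_functor f \o e a.
Proof. symmetry. apply desc_spec. Qed.

Definition desc_nat : NatTrans E desc_functor := Build_NatTrans E desc_functor e desc_nat_proof.
End Desc.

Lemma fc_comp (T A : Category) (F G H : Functor T A) (s : NatTrans G H) (t : NatTrans F G) a :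
  component (@comp (FunCat T A) F G H s t) a = s a \o t a.
Proof. reflexivity. Qed.

Lemma nt_pw (T A : Category) (F G : Functor T A) (s t : NatTrans F G) :
  s = t -> forall a, s a = t a.
Proof. intros ->; auto. Qed.

Lemma fc_id (T A : Category) (F : Functor T A) a :
  component (@idm (FunCat T A) F) a = idm (F a).
Proof. reflexivity. Qed.

Lemma pw_pullback (T A : Category) (P X Y Z : Functor T A)
  (p1 : NatTrans P X) (p2 : NatTrans P Y) (f : NatTrans X Z) (g : NatTrans Y Z) :
  (forall t, is_pullback A (p1 t) (p2 t) (f t) (g t)) ->
  @is_pullback (FunCat T A) P X Y Z p1 p2 f g.
Proof.
  intros Hpw. split.
  - apply nat_trans_eq. intros t. simpl. apply (proj1 (Hpw t)).
  - intros H h1 h2 Eh.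
    assert (Ept : forall t, f t \o h1 t = g t \o h2 t).
    { intros t. exact (nt_pw Eh t). }
    pose (u := fun t => proj1_sig (constructive_indefinite_description _ (proj2 (Hpw t) (H t) (h1 t) (h2 t) (Ept t)))).
    assert (Hu : forall t, (p1 t \o u t = h1 t /\ p2 t \o u t = h2 t) /\
                   forall u', p1 t \o u' = h1 t -> p2 t \o u' = h2 t -> u' = u t).
    { intros t. unfold u. destruct (constructive_indefinite_description _ _) as [v Hv]. exact Hv. }
    assert (Hnat : forall a b (k : Hom T a b), u b \o fmap H k = fmap P k \o u a).
    { intros a b k. apply (pb_jm (Hpw b)).
      - transitivity (fmap X k \o h1 a).
        + rewrite comp_assoc, (proj1 (proj1 (Hu b))). apply naturality.
        + rewrite comp_assoc, (naturality p1), <- comp_assoc, (proj1 (proj1 (Hu a))). reflexivity.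
      - transitivity (fmap Y k \o h2 a).
        + rewrite comp_assoc, (proj2 (proj1 (Hu b))). apply naturality.
        + rewrite comp_assoc, (naturality p2), <- comp_assoc, (proj2 (proj1 (Hu a))). reflexivity. }
    exists (Build_NatTrans H P u Hnat). split.
    + split; apply nat_trans_eq; intros t; simpl; apply (proj1 (Hu t)).
    + intros u' E1 E2. apply nat_trans_eq. intros t. simpl. apply (proj2 (Hu t)).
      * exact (nt_pw E1 t).
      * exact (nt_pw E2 t).
Qed.

Definition coker_choice (A : Category) (HA : is_abelian A) {a b} (f : Hom A a b) :
  {p : {q : Ob A & Hom A b q} | is_cokernel A (projT2 p) f}.
Proof.
  apply constructive_indefinite_description. destruct HA as (_&_&_&_&Hc&_&_).
  destruct (Hc _ _ f) as [q [e H]]. exists (existT _ q e). exact H.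
Defined.
Definition cokO (A : Category) (HA : is_abelian A) {a b} (f : Hom A a b) : Ob A :=
  projT1 (proj1_sig (coker_choice HA f)).
Definition cokE (A : Category) (HA : is_abelian A) {a b} (f : Hom A a b) : Hom A b (cokO HA f) :=
  projT2 (proj1_sig (coker_choice HA f)).
Lemma cokP (A : Category) (HA : is_abelian A) {a b} (f : Hom A a b) : is_cokernel A (cokE HA f) f.
Proof. exact (proj2_sig (coker_choice HA f)). Qed.

Definition ker_choice (A : Category) (HA : is_abelian A) {a b} (f : Hom A a b) :
  {p : {k : Ob A & Hom A k a} | is_kernel A (projT2 p) f}.
Proof.
  apply constructive_indefinite_description. destruct HA as (_&_&_&Hk&_&_&_).
  destruct (Hk _ _ f) as [q [e H]]. exists (existT _ q e). exact H.
Defined.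
Definition kerO (A : Category) (HA : is_abelian A) {a b} (f : Hom A a b) : Ob A :=
  projT1 (proj1_sig (ker_choice HA f)).
Definition kerM (A : Category) (HA : is_abelian A) {a b} (f : Hom A a b) : Hom A (kerO HA f) a :=
  projT2 (proj1_sig (ker_choice HA f)).
Lemma kerP (A : Category) (HA : is_abelian A) {a b} (f : Hom A a b) : is_kernel A (kerM HA f) f.
Proof. exact (proj2_sig (ker_choice HA f)). Qed.

Definition pb_choice (A : Category) (HA : is_abelian A) {a b c} (f : Hom A a c) (g : Hom A b c) :
  {p : {P : Ob A & (Hom A P a * Hom A P b)%type} |
     is_pullback A (fst (projT2 p)) (snd (projT2 p)) f g}.
Proof.
  apply constructive_indefinite_description.
  destruct (pullback_exists HA _ _ _ f g) as [P [p1 [p2 H]]].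
  exists (existT _ P (p1, p2)). exact H.
Defined.
Definition pbO (A : Category) (HA : is_abelian A) {a b c} (f : Hom A a c) (g : Hom A b c) : Ob A :=
  projT1 (proj1_sig (pb_choice HA f g)).
Definition pb1 (A : Category) (HA : is_abelian A) {a b c} (f : Hom A a c) (g : Hom A b c) :
  Hom A (pbO HA f g) a := fst (projT2 (proj1_sig (pb_choice HA f g))).
Definition pb2 (A : Category) (HA : is_abelian A) {a b c} (f : Hom A a c) (g : Hom A b c) :
  Hom A (pbO HA f g) b := snd (projT2 (proj1_sig (pb_choice HA f g))).
Lemma pbP (A : Category) (HA : is_abelian A) {a b c} (f : Hom A a c) (g : Hom A b c) :
  is_pullback A (pb1 HA f g) (pb2 HA f g) f g.
Proof. exact (proj2_sig (pb_choice HA f g)). Qed.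

Definition zero_choice (A : Category) (HA : is_abelian A) a b : Hom A a b :=
  proj1_sig (constructive_indefinite_description _ (zm_exists HA a b)).
Lemma zeroP (A : Category) (HA : is_abelian A) a b : is_zero_mor A (zero_choice HA a b).
Proof. exact (proj2_sig (constructive_indefinite_description _ (zm_exists HA a b))). Qed.

Lemma regular_fc_epi (T A : Category) (F G : Functor T A) (alpha : NatTrans F G) :
  is_regular_epi (FunCat T A) (b := F) (q := G) alpha ->
  forall X (x y : NatTrans G X),
    @comp (FunCat T A) _ _ _ x alpha = @comp (FunCat T A) _ _ _ y alpha -> x = y.
Proof.
  intros [H [f [g [Hc Hu]]]] X x y E.
  destruct (Hu X (@comp (FunCat T A) _ _ _ x alpha)) as [u [_ Huu]].
  { rewrite <- !comp_assoc, Hc. reflexivity. }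
  rewrite (Huu x eq_refl), (Huu y (eq_sym E)). reflexivity.
Qed.

Lemma alpha_pw_epi (T A : Category) (HA : is_abelian A) (F G : Functor T A) (alpha : NatTrans F G) :
  is_regular_epi (FunCat T A) (b := F) (q := G) alpha -> forall t, is_epi A (alpha t).
Proof.
  intros Hreg.
  pose (O := fun t => cokO HA (alpha t)).
  pose (e := fun t => cokE HA (alpha t) : Hom A (G t) (O t)).
  assert (ep : forall t, is_epi A (e t)). { intros t. apply (coker_epi (cokP HA (alpha t))). }
  assert (ex : forall t t' (f : Hom T t t'), exists u : Hom A (O t) (O t'),
      u \o e t = e t' \o fmap G f).
  { intros t t' f. destruct (proj2 (cokP HA (alpha t)) _ (e t' \o fmap G f)) as [u [Hu _]].
    - rewrite <- comp_assoc, <- naturality, comp_assoc. apply zm_pre. apply (cokP HA (alpha t')).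
    - exists u. exact Hu. }
  pose (Q := @desc_functor T A G O e ep ex). pose (q := @desc_nat T A G O e ep ex).
  pose (z := fun t => zero_choice HA (G t) (Q t)).
  assert (Hzn : forall a b (f : Hom T a b), z b \o fmap G f = fmap Q f \o z a).
  { intros a b f. apply zm_unique. apply zm_pre, zeroP. apply zm_post, zeroP. }
  pose (zn := Build_NatTrans G Q z Hzn).
  assert (Eq : q = zn).
  { apply (regular_fc_epi Hreg). apply nat_trans_eq. intros t. simpl.
    apply zm_unique. apply (cokP HA (alpha t)). apply zm_pre, zeroP. }
  intros t. apply (coker_zero_epi HA (cokP HA (alpha t))).
  pose proof (nt_pw Eq t) as Et. simpl in Et. unfold e in Et. rewrite Et. apply zeroP.
Qed.

Lemma chain_lemma (A : Category) (Fx Gx RFx RGx Cx : Ob A)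
  (al : Hom A Fx Gx) (eF : Hom A Fx RFx) (eG : Hom A Gx RGx) (Ra : Hom A RFx RGx)
  (c : Hom A RFx Cx) (w : Hom A Gx Cx) (w' : Hom A RGx Cx) (v : Hom A Cx RGx) :
  w' \o eG = w -> w \o al = c \o eF -> v \o c = Ra -> Ra \o eF = eG \o al ->
  v \o w' \o eG \o al = eG \o al.
Proof.
  intros H1 H2 H3 H4. rewrite <- (comp_assoc _ _ _ _ _ eG w' v), H1, <- comp_assoc, H2,
    comp_assoc, H3. exact H4.
Qed.

Lemma dir21 (A T : Category) (HA : is_abelian A) (S : Ob T -> Prop)
  (R : Functor T A -> Functor T A) (eta : forall F, NatTrans F (R F))
  (Hrefl : is_reflection S R eta)
  (F G : Functor T A) (alpha : NatTrans F G)
  (Hepi : forall t, is_epi A (alpha t))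
  (Hjm : forall t, jointly_mono A (alpha t) (eta F t))
  (Ralpha : NatTrans (R F) (R G))
  (HR : @comp (FunCat T A) _ _ _ Ralpha (eta F) = @comp (FunCat T A) _ _ _ (eta G) alpha) :
  @is_pullback (FunCat T A) F G (R F) (R G) alpha (eta F) (eta G) Ralpha.
Proof.
  assert (HRt : forall t, Ralpha t \o eta F t = eta G t \o alpha t).
  { intros t. exact (nt_pw HR t). }
  pose (O := fun t => kerO HA (alpha t)).
  pose (m := fun t => kerM HA (alpha t) : Hom A (O t) (F t)).
  assert (jmk : forall t, jointly_mono A (m t) (m t)).
  { intros t y u v E _. exact (ker_mono (kerP HA (alpha t)) _ u v E). }
  assert (exk : forall t t' (f : Hom T t t'), exists u : Hom A (O t) (O t'),
      m t' \o u = fmap F f \o m t /\ m t' \o u = fmap F f \o m t).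
  { intros t t' f. destruct (proj2 (kerP HA (alpha t')) _ (fmap F f \o m t)) as [u [Hu _]].
    - rewrite comp_assoc, naturality, <- comp_assoc. apply zm_post. apply (kerP HA (alpha t)).
    - exists u. split; exact Hu. }
  pose (K := @lift_functor T A F F O m m jmk exk).
  pose (k := @lift_nat1 T A F F O m m jmk exk).
  assert (Hk : forall t, is_kernel A (k t) (alpha t)). { intros t. apply kerP. }
  pose (phi := fun t => eta F t \o k t).
  pose (O2 := fun t => cokO HA (phi t)).
  pose (c := fun t => cokE HA (phi t) : Hom A (R F t) (O2 t)).
  assert (Hc : forall t, is_cokernel A (c t) (phi t)). { intros t. apply cokP. }
  assert (epc : forall t, is_epi A (c t)). { intros t. apply (coker_epi (Hc t)). }
  assert (exc : forall t t' (f : Hom T t t'), exists u : Hom A (O2 t) (O2 t'),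
      u \o c t = c t' \o fmap (R F) f).
  { intros t t' f. destruct (proj2 (Hc t) _ (c t' \o fmap (R F) f)) as [u [Hu _]].
    - unfold phi.
      assert (E : (c t' \o fmap (R F) f) \o (eta F t \o k t) = (c t' \o (eta F t' \o k t')) \o fmap K f).
      { rewrite <- !comp_assoc. f_equal. rewrite comp_assoc. rewrite <- (naturality (eta F)).
        rewrite <- comp_assoc. f_equal. symmetry. apply (naturality k). }
      rewrite E. apply zm_pre. apply (Hc t').
    - exists u. exact Hu. }
  pose (Cf := @desc_functor T A (R F) O2 c epc exc).
  pose (cn := @desc_nat T A (R F) O2 c epc exc).
  assert (Hcf : forall a b (f : Hom T a b), fmap Cf f \o c a = c b \o fmap (R F) f).
  { intros a b f. symmetry. apply (naturality cn). }
  assert (HinC : in_F S Cf).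
  { intros t Hn. apply (zero_epi_target (proj1 (Hrefl F) t Hn) (epc t)). }
  assert (Hwex : forall t, exists w : Hom A (G t) (O2 t), w \o alpha t = c t \o eta F t).
  { intros t. destruct (proj2 (epi_coker_ker HA (Hepi t) (Hk t)) _ (c t \o eta F t)) as [w [Hw _]].
    - rewrite <- comp_assoc. apply (Hc t).
    - exists w. exact Hw. }
  pose (w := fun t => proj1_sig (constructive_indefinite_description _ (Hwex t))).
  assert (Hw : forall t, w t \o alpha t = c t \o eta F t).
  { intros t. exact (proj2_sig (constructive_indefinite_description _ (Hwex t))). }
  assert (Hwn : forall a b (f : Hom T a b), w b \o fmap G f = fmap Cf f \o w a).
  { intros a b f. apply (Hepi a).
    transitivity (c b \o (fmap (R F) f \o eta F a)).
    - rewrite <- comp_assoc, <- (naturality alpha), comp_assoc, Hw, <- comp_assoc, (naturality (eta F)).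
      reflexivity.
    - symmetry. rewrite <- comp_assoc, Hw, (comp_assoc _ _ _ _ _ (eta F a) (c a)), Hcf.
      symmetry. apply comp_assoc. }
  pose (wn := Build_NatTrans G Cf w Hwn).
  destruct (proj2 (Hrefl G) Cf HinC wn) as [w' [Hw' _]].
  assert (Hw't : forall t, w' t \o eta G t = w t). { intros t. exact (nt_pw Hw' t). }
  destruct (proj2 (Hrefl F) Cf HinC (@comp (FunCat T A) _ _ _ cn (eta F))) as [gam [_ Hgam]].
  assert (E1 : @comp (FunCat T A) _ _ _ w' Ralpha = cn).
  { rewrite (Hgam cn eq_refl). apply Hgam. apply nat_trans_eq. intros t. simpl.
    rewrite <- comp_assoc, HRt, comp_assoc, Hw't. apply Hw. }
  assert (E1t : forall t, w' t \o Ralpha t = c t). { intros t. exact (nt_pw E1 t). }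
  assert (Hvex : forall t, exists v : Hom A (O2 t) (R G t), v \o c t = Ralpha t).
  { intros t. destruct (proj2 (Hc t) _ (Ralpha t)) as [v [Hv _]].
    - unfold phi. rewrite comp_assoc, HRt, <- comp_assoc. apply zm_post. apply (Hk t).
    - exists v. exact Hv. }
  pose (v := fun t => proj1_sig (constructive_indefinite_description _ (Hvex t))).
  assert (Hv : forall t, v t \o c t = Ralpha t).
  { intros t. exact (proj2_sig (constructive_indefinite_description _ (Hvex t))). }
  assert (Hvn : forall a b (f : Hom T a b), v b \o fmap Cf f = fmap (R G) f \o v a).
  { intros a b f. apply (epc a).
    rewrite <- comp_assoc, Hcf, comp_assoc, Hv, <- comp_assoc, Hv. apply naturality. }
  pose (vn := Build_NatTrans Cf (R G) v Hvn).
  destruct (proj2 (Hrefl G) (R G) (proj1 (Hrefl G)) (eta G)) as [gam2 [_ Hgam2]].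
  assert (E2 : @comp (FunCat T A) _ _ _ vn w' = @idm (FunCat T A) (R G)).
  { rewrite (Hgam2 (@idm (FunCat T A) (R G))).
    - apply Hgam2. apply nat_trans_eq. intros t. simpl. apply (Hepi t).
      eapply chain_lemma; [apply Hw't | apply Hw | apply Hv | apply HRt].
    - apply comp_id_l. }
  assert (Hiso : forall t, is_iso A (v t)).
  { intros t. exists (w' t). split.
    - apply (epc t). rewrite <- comp_assoc, Hv, E1t, comp_id_l. reflexivity.
    - exact (nt_pw E2 t). }
  apply pw_pullback. intros t.
  apply (@key_pullback A HA _ _ _ _ _ (alpha t) (eta F t) (eta G t) (Ralpha t) (k t)).
  - apply Hepi.
  - symmetry. apply HRt.
  - apply Hk.
  - rewrite <- Hv. apply coker_iso. apply (Hc t). apply Hiso.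
  - apply Hjm.
Qed.

Lemma sq_lemma (A : Category) (Px Gx RFx RGx Gx' RFx' RGx' : Ob A)
  (p1 : Hom A Px Gx) (p2 : Hom A Px RFx) (e : Hom A Gx RGx) (Ra : Hom A RFx RGx)
  (e' : Hom A Gx' RGx') (Ra' : Hom A RFx' RGx') (Gf : Hom A Gx Gx') (RFf : Hom A RFx RFx')
  (RGf : Hom A RGx RGx') :
  e' \o Gf = RGf \o e -> e \o p1 = Ra \o p2 -> Ra' \o RFf = RGf \o Ra ->
  e' \o (Gf \o p1) = Ra' \o (RFf \o p2).
Proof.
  intros H1 H2 H3.
  transitivity ((e' \o Gf) \o p1). apply comp_assoc. rewrite H1.
  transitivity (RGf \o (e \o p1)). symmetry; apply comp_assoc. rewrite H2.
  transitivity ((RGf \o Ra) \o p2). apply comp_assoc. rewrite <- H3. symmetry. apply comp_assoc.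
Qed.

Lemma pre_eq (A : Category) (x y z w : Ob A) (X : Hom A y z) (c : Hom A x y) (al : Hom A x z)
  (u v : Hom A w x) : X \o c = al -> al \o u = al \o v -> X \o (c \o u) = X \o (c \o v).
Proof. intros H E. rewrite !comp_assoc, H. exact E. Qed.

Lemma cancel_l (A : Category) (x y w : Ob A) (d : Hom A y x) (c : Hom A x y)
  (u v : Hom A w x) : d \o c = idm x -> c \o u = c \o v -> u = v.
Proof.
  intros H E. rewrite <- (comp_id_l _ _ _ u), <- (comp_id_l _ _ _ v), <- H, <- !comp_assoc, E.
  reflexivity.
Qed.

Lemma dir12 (A T : Category) (HA : is_abelian A) (S : Ob T -> Prop)
  (R : Functor T A -> Functor T A) (eta : forall F, NatTrans F (R F))
  (F G : Functor T A) (alpha : NatTrans F G)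
  (Ra : NatTrans (R F) (R G))
  (Hpb : @is_pullback (FunCat T A) F G (R F) (R G) alpha (eta F) (eta G) Ra) :
  forall t, jointly_mono A (alpha t) (eta F t).
Proof.
  pose (O := fun t => pbO HA (eta G t) (Ra t)).
  pose (p1 := fun t => pb1 HA (eta G t) (Ra t) : Hom A (O t) (G t)).
  pose (p2 := fun t => pb2 HA (eta G t) (Ra t) : Hom A (O t) (R F t)).
  assert (jm : forall t, jointly_mono A (p1 t) (p2 t)).
  { intros t. apply (pb_jm (pbP HA (eta G t) (Ra t))). }
  assert (ex : forall t t' (f : Hom T t t'), exists u : Hom A (O t) (O t'),
      p1 t' \o u = fmap G f \o p1 t /\ p2 t' \o u = fmap (R F) f \o p2 t).
  { intros t t' f.
    destruct (proj2 (pbP HA (eta G t') (Ra t')) _ (fmap G f \o p1 t) (fmap (R F) f \o p2 t))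
      as [u [Hu _]].
    - eapply sq_lemma. apply naturality. apply (pbP HA (eta G t) (Ra t)). apply naturality.
    - exists u. exact Hu. }
  pose (P := @lift_functor T A G (R F) O p1 p2 jm ex).
  pose (pn1 := @lift_nat1 T A G (R F) O p1 p2 jm ex).
  pose (pn2 := @lift_nat2 T A G (R F) O p1 p2 jm ex).
  assert (HP : @is_pullback (FunCat T A) P G (R F) (R G) pn1 pn2 (eta G) Ra).
  { apply pw_pullback. intros t. apply (pbP HA (eta G t) (Ra t)). }
  destruct (proj2 Hpb P pn1 pn2 (proj1 HP)) as [d [[Hd1 Hd2] _]].
  destruct (proj2 HP F alpha (eta F) (proj1 Hpb)) as [c [[Hc1 Hc2] _]].
  destruct (proj2 Hpb F alpha (eta F) (proj1 Hpb)) as [u0 [_ Hu0]].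
  assert (Edc : @comp (FunCat T A) _ _ _ d c = @idm (FunCat T A) F).
  { rewrite (Hu0 (@idm (FunCat T A) F)).
    - apply Hu0.
      + rewrite comp_assoc, Hd1. exact Hc1.
      + rewrite comp_assoc, Hd2. exact Hc2.
    - apply comp_id_r.
    - apply comp_id_r. }
  intros t y u v E1 E2.
  assert (Ec : c t \o u = c t \o v).
  { apply (jm t).
    - eapply pre_eq. exact (nt_pw Hc1 t). exact E1.
    - eapply pre_eq. exact (nt_pw Hc2 t). exact E2. }
  eapply cancel_l. exact (nt_pw Edc t). exact Ec.
Qed.

Theorem mainTheorem4 (A T : Category) (HA : is_abelian A)
  (HT : finite_category T) (S : Ob T -> Prop) (HS : replete T S)
  (R : Functor T A -> Functor T A) (eta : forall F, NatTrans F (R F))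
  (Hrefl : is_reflection S R eta)
  (F G : Functor T A) (alpha : NatTrans F G)
  (Halpha : is_regular_epi (FunCat T A) (b := F) (q := G) alpha) :
  (trivial_extension R eta alpha <->
     forall t : Ob T, jointly_mono A (alpha t) (eta F t)) /\
  (forall t : Ob T, ~ S t ->
     (jointly_mono A (alpha t) (eta F t) <-> is_iso A (alpha t))).
Proof.
  pose proof (alpha_pw_epi HA Halpha) as Hepi.
  split.
  - split.
    + intros Htriv.
      destruct (proj2 (Hrefl F) (R G) (proj1 (Hrefl G)) (@comp (FunCat T A) _ _ _ (eta G) alpha))
        as [Ra [HRa _]].
      exact (@dir12 A T HA S R eta F G alpha Ra (Htriv Ra HRa)).
    + intros Hjm Ra HRa. exact (dir21 HA Hrefl Hepi Hjm HRa).
  - intros t Hn. split.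
    + intros Hjm. apply (mono_epi_iso HA).
      * intros y u v E. apply Hjm; auto. apply (zo_in (proj1 (Hrefl F) t Hn)).
      * apply Hepi.
    + intros [ai [H1 H2]] y u v E _.
      rewrite <- (comp_id_l _ _ _ u), <- (comp_id_l _ _ _ v), <- H1, <- !comp_assoc, E. reflexivity.
Qed.
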